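(* For every (closed) term $P$ and every event $e \in \Sigma$, $$[\![P]\!](e) = \bigcup_{Q \,:\, P \overset{e}{\Rightarrow} Q} [\![Q]\!].$$
   Context: Fix a set $\Sigma$ of events. Terms: $P, Q ::= \mathit{STOP} \mid \mathit{FAIL} \mid ?x{:}E \rightarrow P \mid P \,\Box\, Q \mid P \parallel_E Q$, where an event set $E$ is $f(y_1,\dots,y_n)$ with $f : \Sigma^n \to 2^\Sigma$ computable and each $y_i$ an event variable or event; $x$ is bound in $P$ in $?x{:}E\rightarrow P$. Terms are closed, so each $E$ denotes a subset of $\Sigma$; $[e/x]P$ is substitution of event $e$ for $x$. Trace semantics. A trace set is a prefix-closed subset of $\Sigma^*$ (possibly empty); $\varepsilon$ is the empty trace. For a trace set $T$: $eT := \{\varepsilon\} \cup \{et \mid t \in T\}$, $T(e) := \{t \mid et \in T\}$. For $E \subseteq \Sigma$, $\parallel_E$ on trace sets is the unique function with $\varnothing \parallel_E T = T \parallel_E \varnothing = \varnothing$ and, for nonempty $T_1, T_2$, $T_1 \parallel_E T_2 = \bigcup_{e \in E} e(T_1(e) \parallel_E T_2(e)) \cup \bigcup_{e \in \Sigma\setminus E}( e(T_1(e) \parallel_E T_2) \cup e(T_1 \parallel_E T_2(e)))$. The semantics: $[\![\mathit{STOP}]\!] = \{\varepsilon\}$, $[\![\mathit{FAIL}]\!] = \varnothing$, $[\![?x{:}E \rightarrow P]\!] = \{\varepsilon\} \cup \bigcup_{e \in E} e[\![ [e/x]P ]\!]$, $[\![P \Box Q]\!] = [\![P]\!] \cup [\![Q]\!]$,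 $[\![P \parallel_E Q]\!] = [\![P]\!] \parallel_E [\![Q]\!]$. Operational semantics. Actions $a ::= e \mid \tau$, $\tau \notin \Sigma$. Doomed terms: $D ::= \mathit{FAIL} \mid D \Box D \mid D \parallel_E P \mid P \parallel_E D$; viable terms $\hat P, \hat Q$ are non-doomed terms. The internal transition relation $\xrightarrow{a}$ is the least relation closed under: (1) $e \in E \Rightarrow (?x{:}E \rightarrow P) \xrightarrow{e} [e/x]P$; (2) $P \xrightarrow{\tau} P' \Rightarrow P \Box Q \xrightarrow{\tau} P' \Box Q$; (3) $Q \xrightarrow{\tau} Q' \Rightarrow P \Box Q \xrightarrow{\tau} P \Box Q'$; (4) $P \xrightarrow{e} P' \Rightarrow P \Box Q \xrightarrow{e} P'$; (5) $Q \xrightarrow{e} Q' \Rightarrow P \Box Q \xrightarrow{e} Q'$; (6) $P \xrightarrow{a} P'$, $a \notin E$, $\hat Q$ viable $\Rightarrow P \parallel_E \hat Q \xrightarrow{a} P' \parallel_E \hat Q$; (7) $Q \xrightarrow{a} Q'$, $a \notin E$, $\hat P$ viable $\Rightarrow \hat P \parallel_E Q \xrightarrow{a} \hat P \parallel_E Q'$; (8) $\hat P, \hat Q$ viable, $\hat P \xrightarrow{e} P'$, $\hat Q \xrightarrow{e} Q'$, $e \in E$ $\Rightarrow \hat P \parallel_E \hat Q \xrightarrow{e} P' \parallel_E Q'$; (9) $D_1, D_2$ doomed, $D_1 \xrightarrow{\tau} P_1 \Rightarrow D_1 \parallel_E D_2 \xrightarrow{\tau} P_1 \parallel_E D_2$;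 (10) $D_1, D_2$ doomed, $D_2 \xrightarrow{\tau} P_2 \Rightarrow D_1 \parallel_E D_2 \xrightarrow{\tau} D_1 \parallel_E P_2$; (11) $\mathit{FAIL} \Box \mathit{FAIL} \xrightarrow{\tau} \mathit{FAIL}$; (12) $\mathit{FAIL} \parallel_E P \xrightarrow{\tau} \mathit{FAIL}$; (13) $P \parallel_E \mathit{FAIL} \xrightarrow{\tau} \mathit{FAIL}$. For $s \in \Sigma^*$, the visible transition $P \overset{s}{\Rightarrow} Q$ holds iff there is a finite sequence (possibly of length zero) of internal transitions $P = P_0 \xrightarrow{a_1} P_1 \cdots \xrightarrow{a_n} P_n = Q$ such that deleting all $\tau$'s from $a_1 \cdots a_n$ yields $s$; in particular $P \overset{e}{\Rightarrow} Q$ means such a sequence whose only non-$\tau$ label is a single occurrence of $e$. *)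

(* Defs.v *)
From Stdlib Require Import List Arith.
Import ListNotations.
Set Implicit Arguments.

Section Calculus.
Variable Sigma : Type.

Inductive atom : Type :=
| AVar (x : nat)
| AEv (e : Sigma).

(* event set  f(y_1,...,y_n);  f : Sigma^n -> 2^Sigma is given as a
   (boolean, i.e. decidable) function on the list of its n arguments *)
Inductive eset : Type :=
| ESet (f : list Sigma -> Sigma -> bool) (ys : list atom).

Inductive term : Type :=
| STOP
| FAIL
| Pre (x : nat) (E : eset) (P : term)      (* ?x:E -> P, x bound in P *)
| Ext (P Q : term)
| Par (E : eset) (P Q : term).

Definition closed_atom (bs : list nat) (a : atom) : Prop :=
  match a with AVar x => In x bs | AEv _ => True end.
Definition closed_eset (bs : list nat) (E : eset) : Prop :=
  match E with ESet _ ys => Forall (closed_atom bs) ys end.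
Fixpoint closed_under (bs : list nat) (P : term) : Prop :=
  match P with
  | STOP | FAIL => True
  | Pre x E P => closed_eset bs E /\ closed_under (x :: bs) P
  | Ext P Q => closed_under bs P /\ closed_under bs Q
  | Par E P Q => closed_eset bs E /\ closed_under bs P /\ closed_under bs Q
  end.
Definition closed (P : term) : Prop := closed_under [] P.

Definition subst_atom (e : Sigma) (x : nat) (a : atom) : atom :=
  match a with AVar y => if Nat.eqb x y then AEv e else AVar y | AEv d => AEv d end.
Definition subst_eset (e : Sigma) (x : nat) (E : eset) : eset :=
  match E with ESet f ys => ESet f (map (subst_atom e x) ys) end.
Fixpoint subst (e : Sigma) (x : nat) (P : term) : term :=
  match P with
  | STOP => STOP
  | FAIL => FAIL
  | Pre y E P => Pre y (subst_eset e x E) (if Nat.eqb x y then P else subst e x P)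
  | Ext P Q => Ext (subst e x P) (subst e x Q)
  | Par E P Q => Par (subst_eset e x E) (subst e x P) (subst e x Q)
  end.

(* denotation of a closed event set: e \in f(v_1,...,v_n) *)
Definition inE (E : eset) (e : Sigma) : Prop :=
  match E with ESet f ys => exists vs, ys = map AEv vs /\ f vs e = true end.

Definition tset := list Sigma -> Prop.
Definition deriv (T : tset) (e : Sigma) : tset := fun t => T (e :: t).
Definition nonempty (T : tset) : Prop := exists s, T s.

(* membership in T1 ||_E T2, by recursion on the trace, following the
   defining equations literally *)
Fixpoint par_mem (E : eset) (t : list Sigma) (T1 T2 : tset) : Prop :=
  match t with
  | [] => nonempty T1 /\ nonempty T2 /\ inhabited Sigma
  | e :: t' => nonempty T1 /\ nonempty T2 /\
      ((inE E e /\ par_mem E t' (deriv T1 e) (deriv T2 e)) \/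
       (~ inE E e /\ (par_mem E t' (deriv T1 e) T2 \/ par_mem E t' T1 (deriv T2 e))))
  end.
Definition parT (E : eset) (T1 T2 : tset) : tset := fun t => par_mem E t T1 T2.

(* trace semantics; recursion on a size bound (substitution preserves size) *)
Fixpoint tsize (P : term) : nat :=
  match P with
  | STOP | FAIL => 1
  | Pre _ _ P => S (tsize P)
  | Ext P Q => S (tsize P + tsize Q)
  | Par _ P Q => S (tsize P + tsize Q)
  end.

Fixpoint semn (n : nat) (P : term) : tset :=
  match n with
  | 0 => fun _ => False
  | S n =>
    match P with
    | STOP => fun t => t = []
    | FAIL => fun _ => False
    | Pre x E P => fun t => t = [] \/
        exists e s, t = e :: s /\ inE E e /\ semn n (subst e x P) s
    | Ext P Q => fun t => semn n P t \/ semn n Q t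
    | Par E P Q => parT E (semn n P) (semn n Q)
    end
  end.
Definition sem (P : term) : tset := semn (tsize P) P.

Definition action := option Sigma.   (* None = tau *)

Definition notinE (E : eset) (a : action) : Prop :=
  match a with None => True | Some e => ~ inE E e end.

Inductive doomed : term -> Prop :=
| D_FAIL : doomed FAIL
| D_Ext D1 D2 : doomed D1 -> doomed D2 -> doomed (Ext D1 D2)
| D_ParL E D P : doomed D -> doomed (Par E D P)
| D_ParR E P D : doomed D -> doomed (Par E P D).

Definition viable (P : term) : Prop := ~ doomed P.

Inductive step : term -> action -> term -> Prop :=
| s1 x E P e : inE E e -> step (Pre x E P) (Some e) (subst e x P)
| s2 P P' Q : step P None P' -> step (Ext P Q) None (Ext P' Q)
| s3 P Q Q' : step Q None Q' -> step (Ext P Q) None (Ext P Q')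
| s4 P P' Q e : step P (Some e) P' -> step (Ext P Q) (Some e) P'
| s5 P Q Q' e : step Q (Some e) Q' -> step (Ext P Q) (Some e) Q'
| s6 E P P' Q a : step P a P' -> notinE E a -> viable Q ->
    step (Par E P Q) a (Par E P' Q)
| s7 E P Q Q' a : step Q a Q' -> notinE E a -> viable P ->
    step (Par E P Q) a (Par E P Q')
| s8 E P Q P' Q' e : viable P -> viable Q -> step P (Some e) P' ->
    step Q (Some e) Q' -> inE E e -> step (Par E P Q) (Some e) (Par E P' Q')
| s9 E D1 D2 P1 : doomed D1 -> doomed D2 -> step D1 None P1 ->
    step (Par E D1 D2) None (Par E P1 D2)
| s10 E D1 D2 P2 : doomed D1 -> doomed D2 -> step D2 None P2 ->
    step (Par E D1 D2) None (Par E D1 P2)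
| s11 : step (Ext FAIL FAIL) None FAIL
| s12 E P : step (Par E FAIL P) None FAIL
| s13 E P : step (Par E P FAIL) None FAIL.

Inductive steps : term -> list action -> term -> Prop :=
| steps_nil P : steps P [] P
| steps_cons P a P1 l Q : step P a P1 -> steps P1 l Q -> steps P (a :: l) Q.

(* visible transition P =s=> Q : deleting the taus from the labels gives s *)
Definition wstep (P : term) (s : list Sigma) (Q : term) : Prop :=
  exists l, steps P l Q /\ flat_map (fun a : action => match a with Some e => [e] | None => [] end) l = s.

End Calculus.

(* Main.v *)
Require Import Defs.
From Stdlib Require Import List Lia.
Import ListNotations.

Section H.
Set Implicit Arguments.
Variable Sigma : Type.

Lemma par_ne (E : eset Sigma) t T1 T2 : par_mem E t T1 T2 -> nonempty T1 /\ nonempty T2.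
Proof. destruct t; simpl; tauto. Qed.
Arguments par_ne {E t T1 T2}.

Lemma par_mono (E : eset Sigma) t : forall (T1 T2 T1' T2' : tset Sigma),
  (forall s, T1 s -> T1' s) -> (forall s, T2 s -> T2' s) ->
  par_mem E t T1 T2 -> par_mem E t T1' T2'.
Proof.
  induction t as [|a t IH]; intros T1 T2 T1' T2' H1 H2; simpl.
  - intros [[s Hs] [[s' Hs'] Hi]]. split; [exists s; auto|split; [exists s'; auto|auto]].
  - intros [[s Hs] [[s' Hs'] Hd]]. split; [exists s; auto|split; [exists s'; auto|]].
    destruct Hd as [[Hin Hp]|[Hn [Hp|Hp]]].
    + left. split; auto. eapply IH; [| |exact Hp]; unfold deriv; auto.
    + right. split; auto. left. eapply IH; [| |exact Hp]; unfold deriv; auto.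
    + right. split; auto. right. eapply IH; [| |exact Hp]; unfold deriv; auto.
Qed.

Lemma par_iff (E : eset Sigma) t (T1 T2 T1' T2' : tset Sigma) :
  (forall s, T1 s <-> T1' s) -> (forall s, T2 s <-> T2' s) ->
  (par_mem E t T1 T2 <-> par_mem E t T1' T2').
Proof. intros H1 H2; split; apply par_mono; firstorder. Qed.

Lemma par_union (E : eset Sigma) t : forall (I J : Type) (A : I -> tset Sigma) (B : J -> tset Sigma),
  par_mem E t (fun s => exists i, A i s) (fun s => exists j, B j s) ->
  exists i j, par_mem E t (A i) (B j).
Proof.
  induction t as [|a t IH]; intros I J A B; simpl.
  - intros [[s [i Hs]] [[s' [j Hs']] Hi]]. exists i, j.
    split; [exists s; auto|split; [exists s'; auto|auto]].
  - intros [_ [_ Hd]].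
    destruct Hd as [[Hin Hp]|[Hn [Hp|Hp]]].
    + destruct (@IH I J (fun i => deriv (A i) a) (fun j => deriv (B j) a) Hp) as [i [j Hij]].
      destruct (par_ne Hij) as [[s1 H1] [s2 H2]].
      exists i, j. split; [exists (a::s1); auto|split; [exists (a::s2); auto|]]. left; auto.
    + destruct (@IH I J (fun i => deriv (A i) a) B Hp) as [i [j Hij]].
      destruct (par_ne Hij) as [[s1 H1] [s2 H2]].
      exists i, j. split; [exists (a::s1); auto|split; [exists s2; auto|]]. right; auto.
    + destruct (@IH I J A (fun j => deriv (B j) a) Hp) as [i [j Hij]].
      destruct (par_ne Hij) as [[s1 H1] [s2 H2]].
      exists i, j. split; [exists s1; auto|split; [exists (a::s2); auto|]]. right; auto.
Qed.

Lemma tsize_subst (e : Sigma) x P : tsize (subst e x P) = tsize P.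
Proof.
  induction P; simpl; auto.
  destruct (Nat.eqb x x0); simpl; auto.
Qed.

Lemma semn_stable n : forall m (P : term Sigma), tsize P <= n -> tsize P <= m ->
  forall t, semn n P t <-> semn m P t.
Proof.
  induction n as [|n IH]; intros m P Hn Hm t.
  - destruct P; simpl in Hn; lia.
  - destruct m as [|m]; [destruct P; simpl in Hm; lia|].
    destruct P as [| |x E P|P Q|E P Q]; simpl in Hn, Hm |- *.
    + tauto.
    + tauto.
    + split; intros [H|[e' [s [H1 [H2 H3]]]]]; auto; right; exists e', s;
        repeat split; auto.
      * refine (proj1 (IH m _ _ _ s) H3); rewrite tsize_subst; lia.
      * refine (proj2 (IH m _ _ _ s) H3); rewrite tsize_subst; lia.
    + split; intros [H|H].
      * left; refine (proj1 (IH m _ _ _ t) H); lia.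
      * right; refine (proj1 (IH m _ _ _ t) H); lia.
      * left; refine (proj2 (IH m _ _ _ t) H); lia.
      * right; refine (proj2 (IH m _ _ _ t) H); lia.
    + unfold parT; apply par_iff; intros s; apply IH; lia.
Qed.

Lemma stable_imp n m (P : term Sigma) t : tsize P <= n -> tsize P <= m ->
  semn n P t -> semn m P t.
Proof. intros; eapply semn_stable; [ | | eassumption]; auto. Qed.

Lemma sem_Pre x E (P : term Sigma) t : sem (Pre x E P) t <->
  t = [] \/ exists e s, t = e :: s /\ inE E e /\ sem (subst e x P) s.
Proof.
  unfold sem; simpl.
  split; intros [H|[e [s [H1 [H2 H3]]]]]; auto; right; exists e, s; repeat split; auto;
    (eapply stable_imp; [ | | exact H3]; rewrite ?tsize_subst; lia).
Qed.

Lemma sem_Ext (P Q : term Sigma) t : sem (Ext P Q) t <-> sem P t \/ sem Q t.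
Proof.
  unfold sem; simpl.
  split; intros [H|H]; [left|right|left|right];
    (eapply stable_imp; [ | | exact H]; lia).
Qed.

Lemma sem_Par E (P Q : term Sigma) t : sem (Par E P Q) t <-> par_mem E t (sem P) (sem Q).
Proof.
  unfold sem at 1; simpl; unfold parT; apply par_iff; intro s; unfold sem;
    split; apply stable_imp; lia.
Qed.

Lemma doomed_empty (D : term Sigma) : doomed D -> forall t, ~ sem D t.
Proof.
  induction 1; intros t Ht.
  - exact Ht.
  - apply sem_Ext in Ht; destruct Ht as [Ht|Ht]; [exact (IHdoomed1 _ Ht)|exact (IHdoomed2 _ Ht)].
  - apply sem_Par in Ht; destruct (par_ne Ht) as [[s Hs] _]; exact (IHdoomed _ Hs).
  - apply sem_Par in Ht; destruct (par_ne Ht) as [_ [s Hs]]; exact (IHdoomed _ Hs).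
Qed.

Arguments doomed_empty {D} _ {t}.
Lemma ne_viable (P : term Sigma) t : sem P t -> viable P.
Proof. intros H Hd; exact (doomed_empty Hd H). Qed.

Lemma step_sound (P : term Sigma) a P' : step P a P' ->
  forall t, sem P' t -> sem P (match a with Some e => e :: t | None => t end).
Proof.
  induction 1; intros t Ht.
  - apply sem_Pre; right; exists e, t; auto.
  - apply sem_Ext in Ht; apply sem_Ext; destruct Ht; auto.
  - apply sem_Ext in Ht; apply sem_Ext; destruct Ht; auto.
  - apply sem_Ext; left; auto.
  - apply sem_Ext; right; auto.
  - apply sem_Par in Ht; apply sem_Par. destruct a as [e|]; cbn in IHstep, H0 |- *.
    + destruct (par_ne Ht) as [[s Hs] HQ].
      split; [exists (e :: s); auto|split; auto].
      right; split; auto. left. eapply par_mono; [| |exact Ht]; auto.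
    + eapply par_mono; [| |exact Ht]; auto.
  - apply sem_Par in Ht; apply sem_Par. destruct a as [e|]; cbn in IHstep, H0 |- *.
    + destruct (par_ne Ht) as [HP [s Hs]].
      split; auto; split; [exists (e :: s); auto|].
      right; split; auto. right. eapply par_mono; [| |exact Ht]; auto.
    + eapply par_mono; [| |exact Ht]; auto.
  - apply sem_Par in Ht; apply sem_Par.
    destruct (par_ne Ht) as [[s Hs] [s' Hs']].
    split; [exists (e :: s); auto|split; [exists (e :: s'); auto|]].
    left; split; auto. eapply par_mono; [| |exact Ht]; auto.
  - apply sem_Par in Ht; destruct (par_ne Ht) as [_ [s Hs]].
    exfalso; exact (doomed_empty H0 Hs).
  - apply sem_Par in Ht; destruct (par_ne Ht) as [[s Hs] _].
    exfalso; exact (doomed_empty H Hs).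
  - exfalso; exact Ht.
  - exfalso; exact Ht.
  - exfalso; exact Ht.
Qed.

Arguments step_sound {P a P'} _ {t}.
Inductive tstar : term Sigma -> term Sigma -> Prop :=
| ts_refl P : tstar P P
| ts_step P P1 Q : step P None P1 -> tstar P1 Q -> tstar P Q.

Lemma tstar_trans P Q R : tstar P Q -> tstar Q R -> tstar P R.
Proof. induction 1; intros; auto. eapply ts_step; eauto. Qed.

Lemma tstar_sound P Q : tstar P Q -> forall t, sem Q t -> sem P t.
Proof.
  induction 1; intros t Ht; auto.
  exact (step_sound H (IHtstar t Ht)).
Qed.

Arguments tstar_sound {P Q} _ {t}.
Definition wk (P : term Sigma) e Q :=
  exists P1 P2, tstar P P1 /\ step P1 (Some e) P2 /\ tstar P2 Q.

Lemma wk_sound P e Q t : wk P e Q -> sem Q t -> sem P (e :: t).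
Proof.
  intros [P1 [P2 [H1 [H2 H3]]]] Ht.
  apply (tstar_sound H1). exact (step_sound H2 (tstar_sound H3 Ht)).
Qed.

Arguments wk_sound {P e Q t}.
Lemma tstar_ExtL P P1 Q : tstar P P1 -> tstar (Ext P Q) (Ext P1 Q).
Proof. induction 1. constructor. eapply ts_step; [apply s2; eauto|eauto]. Qed.
Lemma tstar_ExtR P Q Q1 : tstar Q Q1 -> tstar (Ext P Q) (Ext P Q1).
Proof. induction 1. constructor. eapply ts_step; [apply s3; eauto|eauto]. Qed.
Lemma tstar_ParL E P P1 Q : tstar P P1 -> viable Q -> tstar (Par E P Q) (Par E P1 Q).
Proof. induction 1; intros. constructor. eapply ts_step; [eapply s6; [eassumption|exact I|auto]|eauto]. Qed.
Lemma tstar_ParR E P Q Q1 : tstar Q Q1 -> viable P -> tstar (Par E P Q) (Par E P Q1).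
Proof. induction 1; intros. constructor. eapply ts_step; [eapply s7; [eassumption|exact I|auto]|eauto]. Qed.

Lemma wk_ExtL P e P' Q : wk P e P' -> wk (Ext P Q) e P'.
Proof.
  intros [P1 [P2 [H1 [H2 H3]]]]. exists (Ext P1 Q), P2.
  split; [apply tstar_ExtL; auto|split; [apply s4; auto|auto]].
Qed.
Lemma wk_ExtR P e Q Q' : wk Q e Q' -> wk (Ext P Q) e Q'.
Proof.
  intros [P1 [P2 [H1 [H2 H3]]]]. exists (Ext P P1), P2.
  split; [apply tstar_ExtR; auto|split; [apply s5; auto|auto]].
Qed.
Lemma wk_ParL E P e P' Q : wk P e P' -> ~ inE E e -> viable Q -> wk (Par E P Q) e (Par E P' Q).
Proof.
  intros [P1 [P2 [H1 [H2 H3]]]] Hn Hv. exists (Par E P1 Q), (Par E P2 Q).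
  split; [apply tstar_ParL; auto|split; [apply s6; auto|apply tstar_ParL; auto]].
Qed.
Lemma wk_ParR E P e Q Q' : wk Q e Q' -> ~ inE E e -> viable P -> wk (Par E P Q) e (Par E P Q').
Proof.
  intros [P1 [P2 [H1 [H2 H3]]]] Hn Hv. exists (Par E P P1), (Par E P P2).
  split; [apply tstar_ParR; auto|split; [apply s7; auto|apply tstar_ParR; auto]].
Qed.

Lemma wk_sync E P e P' Q Q' : wk P e P' -> wk Q e Q' -> inE E e ->
  nonempty (sem P') -> nonempty (sem Q') -> wk (Par E P Q) e (Par E P' Q').
Proof.
  intros HP HQ Hin [s Hs] [s' Hs'].
  pose proof (wk_sound HP Hs) as HsP. pose proof (wk_sound HQ Hs') as HsQ.
  destruct HP as [P1 [P2 [H1 [H2 H3]]]]. destruct HQ as [Q1 [Q2 [K1 [K2 K3]]]].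
  pose proof (tstar_sound H3 Hs) as HP2. pose proof (tstar_sound K3 Hs') as HQ2.
  pose proof (step_sound H2 HP2) as HP1. pose proof (step_sound K2 HQ2) as HQ1.
  cbn in HP1, HQ1.
  exists (Par E P1 Q1), (Par E P2 Q2). split; [|split].
  - eapply tstar_trans; [apply tstar_ParL; [eassumption|eapply ne_viable; eassumption]|].
    apply tstar_ParR; [eassumption|eapply ne_viable; eassumption].
  - apply s8; auto; eapply ne_viable; eassumption.
  - eapply tstar_trans; [apply tstar_ParL; [eassumption|eapply ne_viable; eassumption]|].
    apply tstar_ParR; [eassumption|eapply ne_viable; eassumption].
Qed.

Lemma complete (e : Sigma) P : forall t, sem P (e :: t) -> exists Q, wk P e Q /\ sem Q t.
Proof.
  induction P as [| |x E P IH|P IHP Q IHQ|E P IHP Q IHQ]; intros t Ht.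
  - unfold sem in Ht; simpl in Ht; discriminate.
  - exfalso; exact Ht.
  - apply sem_Pre in Ht. destruct Ht as [Ht|[e' [s [H1 [H2 H3]]]]]; [discriminate|].
    injection H1; intros; subst.
    exists (subst e' x P); split; auto. exists (Pre x E P), (subst e' x P).
    split; [constructor|split; [constructor; auto|constructor]].
  - apply sem_Ext in Ht; destruct Ht as [Ht|Ht].
    + destruct (IHP _ Ht) as [Q' [H1 H2]]; exists Q'; split; auto; apply wk_ExtL; auto.
    + destruct (IHQ _ Ht) as [Q' [H1 H2]]; exists Q'; split; auto; apply wk_ExtR; auto.
  - apply sem_Par in Ht. simpl in Ht. destruct Ht as [[sp HP] [[sq HQ] Hd]].
    destruct Hd as [[Hin Hp]|[Hn [Hp|Hp]]].
    + assert (Hp' : par_mem E t (fun s => exists P', wk P e P' /\ sem P' s)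
                      (fun s => exists Q', wk Q e Q' /\ sem Q' s)).
      { eapply par_mono; [| |exact Hp]; intros s Hs; [apply IHP|apply IHQ]; exact Hs. }
      destruct (@par_union E t (term Sigma) (term Sigma) (fun P' s => wk P e P' /\ sem P' s)
                  (fun Q' s => wk Q e Q' /\ sem Q' s) Hp') as [P' [Q' Hpq]].
      destruct (par_ne Hpq) as [[s1 [Hw1 Hs1]] [s2 [Hw2 Hs2]]].
      exists (Par E P' Q'). split.
      * apply wk_sync; auto; [exists s1|exists s2]; auto.
      * apply sem_Par. eapply par_mono; [| |exact Hpq]; intros s [_ Hs]; exact Hs.
    + assert (Hp' : par_mem E t (fun s => exists P', wk P e P' /\ sem P' s)
                      (fun s => exists u : unit, sem Q s)).
      { eapply par_mono; [| |exact Hp]; intros s Hs; [apply IHP; exact Hs|exists tt; exact Hs]. }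
      destruct (@par_union E t (term Sigma) unit (fun P' s => wk P e P' /\ sem P' s)
                  (fun _ s => sem Q s) Hp') as [P' [u Hpq]].
      destruct (par_ne Hpq) as [[s1 [Hw1 Hs1]] _].
      exists (Par E P' Q). split.
      * apply wk_ParL; auto. eapply ne_viable; eassumption.
      * apply sem_Par. eapply par_mono; [| |exact Hpq]; [intros s [_ Hs]; exact Hs|auto].
    + assert (Hp' : par_mem E t (fun s => exists u : unit, sem P s)
                      (fun s => exists Q', wk Q e Q' /\ sem Q' s)).
      { eapply par_mono; [| |exact Hp]; intros s Hs; [exists tt; exact Hs|apply IHQ; exact Hs]. }
      destruct (@par_union E t unit (term Sigma) (fun _ s => sem P s)
                  (fun Q' s => wk Q e Q' /\ sem Q' s) Hp') as [u [Q' Hpq]].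
      destruct (par_ne Hpq) as [_ [s2 [Hw2 Hs2]]].
      exists (Par E P Q'). split.
      * apply wk_ParR; auto. eapply ne_viable; eassumption.
      * apply sem_Par. eapply par_mono; [| |exact Hpq]; [auto|intros s [_ Hs]; exact Hs].
Qed.

Definition fl (l : list (action Sigma)) : list Sigma :=
  flat_map (fun a : action Sigma => match a with Some e => [e] | None => [] end) l.

Lemma fl_some e l : fl (Some e :: l) = e :: fl l.
Proof. reflexivity. Qed.
Lemma fl_none l : fl (None :: l) = fl l.
Proof. reflexivity. Qed.
Lemma fl_app l1 l2 : fl (l1 ++ l2) = fl l1 ++ fl l2.
Proof. unfold fl; apply flat_map_app. Qed.

Lemma steps_gen P l Q : steps P l Q ->
  (fl l = [] -> tstar P Q) /\ (forall e, fl l = [e] -> wk P e Q).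
Proof.
  induction 1 as [P|P a P1 l Q Hs Hst [IH1 IH2]].
  - split; [constructor|intros e H; discriminate].
  - destruct a as [e'|].
    + rewrite fl_some. split; [intros H; discriminate|].
      intros e H; injection H; intros H' ->. exists P, P1.
      split; [constructor|split; auto].
    + rewrite fl_none. split.
      * intros H; apply ts_step with P1; auto.
      * intros e H; destruct (IH2 e H) as [X [Y [A [B C]]]]; exists X, Y.
        split; [apply ts_step with P1; auto|auto].
Qed.

Lemma tstar_steps P Q : tstar P Q -> exists l, steps P l Q /\ fl l = [].
Proof.
  induction 1 as [P|P P1 Q Hs Hst [l [Hl Hf]]].
  - exists []; split; [constructor|reflexivity].
  - exists (None :: l); split; [econstructor; eauto|rewrite fl_none; auto].
Qed.

Lemma steps_app (P : term Sigma) l1 R l2 Q : steps P l1 R -> steps R l2 Q -> steps P (l1 ++ l2) Q.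
Proof. induction 1; intros; simpl; auto. econstructor; eauto. Qed.

Lemma wk_wstep P e Q : wk P e Q -> wstep P [e] Q.
Proof.
  intros [P1 [P2 [H1 [H2 H3]]]].
  destruct (tstar_steps H1) as [l1 [Hl1 Hf1]].
  destruct (tstar_steps H3) as [l2 [Hl2 Hf2]].
  exists (l1 ++ Some e :: l2). split.
  - eapply steps_app; [eassumption|econstructor; eauto].
  - change (fl (l1 ++ Some e :: l2) = [e]). rewrite fl_app, fl_some, Hf1, Hf2. reflexivity.
Qed.

Lemma wstep_wk P e Q : wstep P [e] Q -> wk P e Q.
Proof. intros [l [Hs Hf]]. exact (proj2 (steps_gen Hs) e Hf). Qed.

End H.
Unset Implicit Arguments.

Theorem lemma2 (Sigma : Type) (P : term Sigma) (e : Sigma) :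
  closed P ->
  forall t : list Sigma,
    sem P (e :: t) <-> exists Q : term Sigma, wstep P [e] Q /\ sem Q t.
Proof.
  intros _ t. split.
  - intros H. destruct (@complete _ e P t H) as [Q [H1 H2]].
    exists Q; split; [apply wk_wstep|]; auto.
  - intros [Q [H1 H2]]. exact (@wk_sound _ P e Q t (@wstep_wk _ P e Q H1) H2).
Qed.
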